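(* For every $U\in U(4)$ there exist $U_1,U_2,U_3,U_4,U_5,U_6\in U(2)$ such that $$U=(U_1\otimes U_2)\,\cdot\,\mathtt{botCNOT}\,\cdot\,\begin{pmatrix}\mathbf{1}&0\\0&U_3\end{pmatrix}\,\cdot\,(\mathbf{1}\otimes U_4)\,\cdot\,\mathtt{botCNOT}\,\cdot\,(U_5\otimes U_6),$$ where $\begin{pmatrix}\mathbf{1}&0\\0&U_3\end{pmatrix}$ is the $4\times4$ block-diagonal matrix with $2\times 2$ blocks $\mathbf{1}$ and $U_3$.
   Context: $U(n)$ is the group of $n\times n$ unitary matrices, $\mathbf{1}$ the $2\times 2$ identity, $\otimes$ the Kronecker product with respect to the ordered basis $|00\rangle,|01\rangle,|10\rangle,|11\rangle$, and $\cdot$ the matrix product. $\mathtt{botCNOT}$ is the permutation matrix $\begin{pmatrix}1&0&0&0\\0&0&0&1\\0&0&1&0\\0&1&0&0\end{pmatrix}$ (swapping $|01\rangle\leftrightarrow|11\rangle$). *)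

(* Defs.v *)
From HB Require Import structures.
From mathcomp Require Import all_boot all_order all_algebra.
From mathcomp.real_closed Require Import complex mxtens.
Set Implicit Arguments. Unset Strict Implicit. Unset Printing Implicit Defensive.
Import GRing.Theory.
Local Open Scope ring_scope.
Local Open Scope complex_scope.

Definition adjmx (R : rcfType) (n : nat) (A : 'M[R[i]]_n) : 'M[R[i]]_n :=
  (map_mx (@conjc R) A)^T.

Definition unitary (R : rcfType) (n : nat) (A : 'M[R[i]]_n) : Prop :=
  A *m adjmx A = 1%:M /\ adjmx A *m A = 1%:M.

(* Kronecker product of two 2x2 matrices w.r.t. ordered basis |00>,|01>,|10>,|11>:
   (A (x) B)_{2a+b, 2c+d} = A_{a,c} B_{b,d}  (mathcomp's tensmx). *)
Definition kron2 (R : rcfType) (A B : 'M[R[i]]_2) : 'M[R[i]]_4 := tensmx A B.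

(* botCNOT: permutation matrix swapping |01> <-> |11> (indices 1 and 3). *)
Definition botCNOT (R : rcfType) : 'M[R[i]]_4 :=
  \matrix_(i < 4, j < 4)
    (if ((i : nat) == 0%N) || ((i : nat) == 2%N) then ((i : nat) == j)%:R
     else (((i : nat) + (j : nat) == 4%N) && ((i : nat) != j))%:R).

Definition ctrlU (R : rcfType) (U : 'M[R[i]]_2) : 'M[R[i]]_4 :=
  block_mx (1%:M : 'M[R[i]]_2) 0 0 U.

(* Main.v *)
Require Import Defs.
From HB Require Import structures.
From mathcomp Require Import all_boot all_order all_algebra.
From mathcomp.real_closed Require Import complex mxtens.
From mathcomp Require Import reals.
From mathcomp Require Import ring.
Set Implicit Arguments. Unset Strict Implicit. Unset Printing Implicit Defensive.
Import GRing.Theory Num.Theory.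
Local Open Scope ring_scope.

Definition o0 : 'I_4 := @Ordinal 4 0 isT.
Definition o1 : 'I_4 := @Ordinal 4 1 isT.
Definition o2 : 'I_4 := @Ordinal 4 2 isT.
Definition o3 : 'I_4 := @Ordinal 4 3 isT.
Definition p0 : 'I_2 := @Ordinal 2 0 isT.
Definition p1 : 'I_2 := @Ordinal 2 1 isT.

Lemma ord4P (i : 'I_4) : i = o0 \/ i = o1 \/ i = o2 \/ i = o3.
Proof.
case: i => [[|[|[|[|k]]]] Hk]; try (by left; apply: val_inj);
  try (by right; left; apply: val_inj);
  try (by right; right; left; apply: val_inj);
  try (by right; right; right; apply: val_inj).

Qed.

Lemma ord2P (i : 'I_2) : i = p0 \/ i = p1.
Proof.
case: i => [[|[|k]] Hk]; try (by left; apply: val_inj);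
  try (by right; apply: val_inj).
Qed.

Lemma sum4 (V : zmodType) (F : 'I_4 -> V) : \sum_(k < 4) F k = F o0 + F o1 + F o2 + F o3.
Proof.
rewrite !big_ord_recr big_ord0 /= add0r.
by congr (_ + _ + _ + _); congr F; apply: val_inj.
Qed.

Lemma sum2 (V : zmodType) (F : 'I_2 -> V) : \sum_(k < 2) F k = F p0 + F p1.
Proof.
rewrite !big_ord_recr big_ord0 /= add0r.
by congr (_ + _); congr F; apply: val_inj.
Qed.

Definition hi (i : 'I_4) : 'I_2 := match val i with 0 | 1 => p0 | _ => p1 end.
Definition lo (i : 'I_4) : 'I_2 := match val i with 0 | 2 => p0 | _ => p1 end.

Section S.
Variable R : realType.
Local Notation C := (R[i]).

Lemma kron2E (A B : 'M[C]_2) :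
  kron2 A B = \matrix_(i, j) (A (hi i) (hi j) * B (lo i) (lo j)).
Proof.
apply/matrixP => i j; rewrite /kron2 /tensmx !mxE.
by case: (ord4P i) => [|[|[|]]] ->; case: (ord4P j) => [|[|[|]]] ->;
  congr (A _ _ * B _ _); apply: val_inj.
Qed.

Definition Cn : 'M[C]_4 := \matrix_(i, j)
  match val i, val j with
  | 0, 0 => 1 | 1, 3 => 1 | 2, 2 => 1 | 3, 1 => 1 | _, _ => 0 end.

Lemma botCNOTE : botCNOT R = Cn.
Proof.
apply/matrixP => i j; rewrite !mxE.
by case: (ord4P i) => [|[|[|]]] ->; case: (ord4P j) => [|[|[|]]] ->.
Qed.

End S.
Section S.
Variable R : realType.
Local Notation C := (R[i]).
Local Open Scope sesquilinear_scope.
Import Num.Def.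

Lemma adjE n (A : 'M[C]_n) : adjmx A = A ^t*.
Proof. by rewrite /adjmx map_trmx. Qed.

Lemma unitaryE n (A : 'M[C]_n) : unitary A <-> (A *m A^t* = 1%:M /\ A^t* *m A = 1%:M).
Proof. by rewrite /unitary adjE. Qed.

Lemma tCM m n p (A : 'M[C]_(m, n)) (B : 'M[C]_(n, p)) : (A *m B)^t* = B^t* *m A^t*.
Proof. by rewrite trmx_mul map_mxM. Qed.

Lemma unitary_mul n (A B : 'M[C]_n) : unitary A -> unitary B -> unitary (A *m B).
Proof.
move=> /unitaryE [h1 h2] /unitaryE [h3 h4]; apply/unitaryE; rewrite tCM; split.
  by rewrite mulmxA -(mulmxA A) h3 mulmx1 h1.
by rewrite !mulmxA -(mulmxA (B^t*) (A^t*) A) h2 mulmx1 h4.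
Qed.

Lemma unitary_adj n (A : 'M[C]_n) : unitary A -> unitary (A^t*).
Proof. by move=> /unitaryE [h1 h2]; apply/unitaryE; rewrite trmxCK. Qed.

Lemma unitary_half n (A : 'M[C]_n) : A *m A^t* = 1%:M -> unitary A.
Proof. by move=> h; apply/unitaryE; split => //; apply: mulmx1C. Qed.
End S.
Section S2.
Variable R : realType.
Local Notation C := (R[i]).
Local Open Scope sesquilinear_scope.
Import Num.Def.

Definition Yt : 'M[C]_4 := \matrix_(i, j)
  match val i, val j with
  | 0, 3 => -1 | 1, 2 => 1 | 2, 1 => 1 | 3, 0 => -1 | _, _ => 0 end.

Lemma id4E (i j : 'I_4) : (1%:M : 'M[C]_4) i j = if val i == val j then 1 else 0.
Proof. by rewrite mxE; case: eqP => [->|h]; [rewrite eqxx | case: eqP => // /val_inj]. Qed.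

Ltac ent := apply/matrixP; let i := fresh "i" in let j := fresh "j" in intros i j; rewrite ?id4E !mxE ?sum4 ?mxE ?sum4 ?mxE ?sum4 ?mxE;
  case: (ord4P i) => [|[|[|]]] ->; case: (ord4P j) => [|[|[|]]] -> /=.

Lemma YY : Yt *m Yt = 1%:M.
Proof. ent; ring. Qed.

Lemma Yc : map_mx conjC Yt = Yt.
Proof. ent; by rewrite ?rmorph0 ?rmorphN ?rmorph1. Qed.

Lemma YT : Yt^T = Yt.
Proof. ent; by []. Qed.

Lemma Yts : Yt^t* = Yt.
Proof. by rewrite YT Yc. Qed.

Lemma cancel1 m n (X : 'M[C]_(m, n)) (A : 'M[C]_(n, n)) (B : 'M[C]_n) :
  A *m B = 1%:M -> X *m A *m B = X.
Proof. by move=> h; rewrite -mulmxA h mulmx1. Qed.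

Lemma ttc m n (A : 'M[C]_(m, n)) : (A^t*)^T = map_mx conjC A.
Proof. by rewrite -map_trmx trmxK. Qed.

Definition th (v : 'cV[C]_4) : 'cV[C]_4 := Yt *m map_mx conjC v.

Lemma thth v : th (th v) = v.
Proof. by rewrite /th map_mxM Yc map_mxCK mulmxA YY mul1mx. Qed.

Lemma thlin (s t : C) v w : th (s *: v + t *: w) = s^* *: th v + t^* *: th w.
Proof. by rewrite /th map_mxD !map_mxZ mulmxDr -!scalemxAr. Qed.

Section U.
Variable U : 'M[C]_4.
Hypothesis h1 : U *m U^t* = 1%:M.
Hypothesis h2 : U^t* *m U = 1%:M.
Let Uc := map_mx conjC U.
Lemma ha : Uc *m U^T = 1%:M.
Proof. by move: (congr1 trmx h1); rewrite trmx_mul ttc trmx1. Qed.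
Lemma hb : U^T *m Uc = 1%:M.
Proof. by move: (congr1 trmx h2); rewrite trmx_mul ttc trmx1. Qed.

Definition Km := Yt *m U^T *m Yt *m U.

Lemma Kc : map_mx conjC Km = Yt *m U^t* *m Yt *m Uc.
Proof. by rewrite /Km !map_mxM Yc. Qed.

Lemma KYK : Km *m Yt *m map_mx conjC Km = Yt.
Proof.
rewrite Kc /Km !mulmxA (cancel1 _ YY) (cancel1 _ h1) (cancel1 _ YY).
by rewrite (cancel1 _ hb).
Qed.

Lemma Kunit : Km *m Km^t* = 1%:M.
Proof.
rewrite /Km !tCM Yts trmxK !mulmxA (cancel1 _ h1) (cancel1 _ YY) (cancel1 _ hb).
exact: YY.
Qed.

Lemma Ueq : Yt *m Uc *m Yt *m Km = U.
Proof.
by rewrite /Km !mulmxA (cancel1 _ YY) (cancel1 _ ha) YY mul1mx.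
Qed.

Lemma thK (v : 'cV[C]_4) (d : C) : Km *m v = d *: v -> d * d^* = 1 ->
  Km *m th v = d *: th v.
Proof.
move=> hv hd.
have e1 : map_mx conjC Km *m map_mx conjC v = d^* *: map_mx conjC v.
  by rewrite -map_mxM hv map_mxZ.
have e2 : th v = d^* *: (Km *m th v).
  rewrite {1}/th -{1}KYK -mulmxA e1 -scalemxAr /th.
  by rewrite mulmxA.
by rewrite {2}e2 scalerA hd scale1r.
Qed.

Lemma thU (w : 'cV[C]_4) (l : C) : th w = w -> Km *m w = l *: w ->
  l *: th (U *m w) = U *m w.
Proof.
move=> hw hK.
have wc : map_mx conjC w = Yt *m w.
  by rewrite -{2}hw /th mulmxA YY mul1mx.
rewrite /th map_mxM wc -{2}Ueq.
rewrite -[in RHS](mulmxA _ Km) hK -!scalemxAr !mulmxA.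
by [].
Qed.
End U.
End S2.
Arguments Yt {R}.
Section S3.
Variable R : realType.
Local Notation C := (R[i]).
Local Open Scope sesquilinear_scope.
Import Num.Def.

Definition indep (g1 g2 : 'cV[C]_4) :=
  forall s t : C, s *: g1 + t *: g2 = 0 -> s = 0 /\ t = 0.

Lemma thD (v w : 'cV[C]_4) : th (v + w) = th v + th w.
Proof. by rewrite /th map_mxD mulmxDr. Qed.
Lemma thN (v : 'cV[C]_4) : th (- v) = - th v.
Proof. by rewrite /th map_mxN mulmxN. Qed.
Lemma thZ (c : C) (v : 'cV[C]_4) : th (c *: v) = c^* *: th v.
Proof. by rewrite /th map_mxZ -scalemxAr. Qed.

Definition fx (v : 'cV[C]_4) :=
  if v + th v == 0 then 'i *: (v - th v) else v + th v.

Lemma fx_th (v : 'cV[C]_4) : th (fx v) = fx v.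
Proof.
rewrite /fx; case: ifP => _.
  by rewrite thZ thD thN thth conjCi scaleNr -scalerN opprB.
by rewrite thD thth addrC.
Qed.

Lemma fx_nz (v : 'cV[C]_4) : v != 0 -> fx v != 0.
Proof.
move=> vn; rewrite /fx; case: ifP => [/eqP h1|/negbT //].
rewrite scalemx_eq0 negb_or neq0Ci /=; apply: contra vn => /eqP h2.
move: h1 h2; move: (th v) => t h1 h2.
apply/eqP/matrixP => i j.
move/matrixP: h1 => /(_ i j); move/matrixP: h2 => /(_ i j); rewrite !mxE.
move=> e1 e2.
have : (v i j) *+ 2 = 0.
  have -> : v i j *+ 2 = (v i j + t i j) + (v i j - t i j) by ring.
  by rewrite e1 e2 addr0.
move/eqP; rewrite -mulr_natr mulf_eq0 pnatr_eq0 orbF => /eqP -> //.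
Qed.

Section K.
Variable K : 'M[C]_4.
Hypothesis hKu : K *m K^t* = 1%:M.
Hypothesis hKYK : K *m Yt *m map_mx conjC K = Yt.

Lemma thK' (v : 'cV[C]_4) (d : C) : K *m v = d *: v -> d * d^* = 1 ->
  K *m th v = d *: th v.
Proof.
move=> hv hd.
have e1 : map_mx conjC K *m map_mx conjC v = d^* *: map_mx conjC v.
  by rewrite -map_mxM hv map_mxZ.
have e2 : th v = d^* *: (K *m th v).
  rewrite {1}/th -{1}hKYK -mulmxA e1 -scalemxAr /th.
  by rewrite mulmxA.
by rewrite {2}e2 scalerA hd scale1r.
Qed.

Lemma fx_eig (v : 'cV[C]_4) (d : C) : K *m v = d *: v -> d * d^* = 1 -> K *m fx v = d *: fx v.
Proof.
move=> hv hd; have ht := thK' hv hd.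
rewrite /fx; case: ifP => _.
  by rewrite -scalemxAr mulmxBr hv ht -scalerBr !scalerA mulrC.
by rewrite mulmxDr hv ht scalerDr.
Qed.

Lemma indep_eig (w1 w2 : 'cV[C]_4) (l1 l2 : C) : w1 != 0 -> w2 != 0 -> K *m w1 = l1 *: w1 ->
  K *m w2 = l2 *: w2 -> l1 != l2 -> indep w1 w2.
Proof.
move=> n1 n2 e1 e2 nl s t h.
have hs : s *: w1 = - (t *: w2) by apply/eqP; rewrite -addr_eq0 h.
have hk : K *m (s *: w1) = l1 *: (s *: w1) by rewrite -scalemxAr e1 !scalerA mulrC.
move: hk; rewrite hs mulmxN -scalemxAr e2 scalerN => /oppr_inj.
rewrite !scalerA => /eqP; rewrite -subr_eq0 -scalerBl scalemx_eq0 (negPf n2) orbF.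
rewrite [l1 * t]mulrC -mulrBr mulf_eq0 subr_eq0 (eq_sym l2) (negPf nl) orbF => /eqP t0.
split => //; move: hs; rewrite t0 scale0r oppr0 => /eqP.
by rewrite scalemx_eq0 (negPf n1) orbF => /eqP.
Qed.
End K.
End S3.
Section S4.
Variable R : realType.
Local Notation C := (R[i]).
Local Open Scope sesquilinear_scope.
Import Num.Def.

Definition e03 : 'cV[C]_4 := \matrix_(i, j) match val i with 0 => 1 | 3 => -1 | _ => 0 end.
Definition e12 : 'cV[C]_4 := \matrix_(i, j) match val i with 1 => 1 | 2 => 1 | _ => 0 end.

Ltac entv := apply/matrixP; let i := fresh "i" in let j := fresh "j" in intros i j;
  rewrite ?mxE ?sum4 ?mxE ?sum4 ?mxE; case: (ord4P i) => [|[|[|]]] ->; rewrite ?(ord1 j) /=.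

Lemma th_e03 : th e03 = e03.
Proof. rewrite /th; entv; by rewrite ?rmorph0 ?rmorphN ?rmorph1; ring. Qed.
Lemma th_e12 : th e12 = e12.
Proof. rewrite /th; entv; by rewrite ?rmorph0 ?rmorphN ?rmorph1; ring. Qed.
Lemma indep_e : indep e03 e12.
Proof.
move=> s t /matrixP h; have h0 := h o0 ord0; have h1 := h o1 ord0.
move: h0 h1; rewrite !mxE /= => h0 h1.
split.
  by move: h0; rewrite mulr1 mulr0 addr0.
by move: h1; rewrite mulr1 mulr0 add0r.
Qed.

Section K.
Variable K : 'M[C]_4.
Hypothesis hKu : K *m K^t* = 1%:M.
Hypothesis hKYK : K *m Yt *m map_mx conjC K = Yt.

Lemma exists_w : exists w1 w2 l1 l2,
  [/\ indep w1 w2, th w1 = w1, th w2 = w2, K *m w1 = l1 *: w1 & K *m w2 = l2 *: w2]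
  /\ l1 * l1^* = 1 /\ l2 * l2^* = 1.
Proof.
have Kn : K \is normalmx by apply/normalmxP; rewrite hKu (mulmx1C hKu).
move/orthomx_spectralP: Kn.
have := spectral_unitarymx K.
set P := spectralmx K; set dd := spectral_diag K => Pun HK.
have Pu : P *m P^t* = 1%:M by apply/unitarymxP.
rewrite invmx_unitary // in HK.
have QP : P^t* *m P = 1%:M := mulmx1C Pu.
move: HK Pu QP; set Q := P^t* => HK Pu QP.
have KQ : K *m Q = Q *m diag_mx dd by rewrite {1}HK (cancel1 _ Pu).
have HD : diag_mx dd = P *m K *m Q.
  by rewrite HK !mulmxA Pu mul1mx (cancel1 _ Pu).
have D1 : forall j, dd 0 j * (dd 0 j)^* = 1.
  move=> j.
  have DD : (P *m K *m Q) *m (P *m K *m Q)^t* = 1%:M.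
    by rewrite !tCM trmxCK !mulmxA (cancel1 _ QP) (cancel1 _ hKu) Pu.
  move: DD; rewrite -HD tr_diag_mx map_diag_mx mulmx_diag => /matrixP /(_ j j).
  by rewrite !mxE eqxx mulr1n.
have EV : forall j, K *m col j Q = dd 0 j *: col j Q.
  move=> j; rewrite !colE mulmxA KQ mul_mx_diag -!colE.
  by apply/matrixP => i k; rewrite !mxE mulrC.
have NZ : forall j, col j Q != 0.
  move=> j; apply/negP => /eqP h.
  have : P *m col j Q = col j 1%:M by rewrite !colE mulmxA Pu.
  rewrite h mulmx0 col1 => /matrixP /(_ j 0); rewrite [RHS]mxE !eqxx /=.
  by rewrite mxE => /eqP; rewrite eq_sym oner_eq0.
case: (boolP [exists j, dd 0 j != dd 0 o0]) => [/existsP [j hj] | /existsPn hall].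
  exists (fx (col o0 Q)), (fx (col j Q)), (dd 0 o0), (dd 0 j).
  split; last by split; apply: D1.
  split; rewrite ?fx_th //; try (apply: fx_eig => //; exact: EV).
  apply: (@indep_eig _ K); rewrite ?fx_nz //; try (apply: fx_eig => //; exact: EV).
  by rewrite eq_sym.
have Ks : K = (dd 0 o0)%:M.
  rewrite HK; have -> : diag_mx dd = (dd 0 o0)%:M.
    by apply/matrixP => i k; rewrite !mxE (eqP (negbNE (hall i))).
  by rewrite mul_mx_scalar -scalemxAl QP scalemx1.
exists e03, e12, (dd 0 o0), (dd 0 o0).
split; last by split; apply: D1.
split; [exact: indep_e | exact: th_e03 | exact: th_e12 | by rewrite Ks mul_scalar_mx | by rewrite Ks mul_scalar_mx].
Qed.
End K.
End S4.
Section S5.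
Variable R : realType.
Local Notation C := (R[i]).
Local Open Scope sesquilinear_scope.
Import Num.Def.

Definition inspan (v g1 g2 : 'cV[C]_4) := exists s t : C, v = s *: g1 + t *: g2.
Definition dt (x : 'cV[C]_4) := x o0 ord0 * x o3 ord0 - x o1 ord0 * x o2 ord0.

Lemma vec0 (x : 'cV[C]_4) : x o0 ord0 = 0 -> x o1 ord0 = 0 -> x o2 ord0 = 0 ->
  x o3 ord0 = 0 -> x = 0.
Proof.
move=> h0 h1 h2 h3; apply/matrixP => i j; rewrite (ord1 j) [RHS]mxE.
by case: (ord4P i) => [|[|[|]]] ->.
Qed.

Lemma span_swap (g1 g2 m0 m3 : 'cV[C]_4) p0 q0 p1 q1 :
  m0 = p0 *: g1 + q0 *: g2 -> m3 = p1 *: g1 + q1 *: g2 -> indep m0 m3 ->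
  inspan g1 m0 m3 /\ inspan g2 m0 m3.
Proof.
move=> hm0 hm3 hi.
set D := p0 * q1 - q0 * p1.
have k1 : q1 *: m0 + (- q0) *: m3 = D *: g1.
  by apply/matrixP => i j; rewrite hm0 hm3 !mxE /D; ring.
have k2 : (- p1) *: m0 + p0 *: m3 = D *: g2.
  by apply/matrixP => i j; rewrite hm0 hm3 !mxE /D; ring.
have [D0|Dn] := eqVneq D 0.
  move: k1 k2; rewrite D0 !scale0r => /hi [q10 q00] /hi [p10 p00].
  have q0z : q0 = 0 by apply/eqP; rewrite -oppr_eq0 q00.
  have : 1 *: m0 + 0 *: m3 = 0.
    by rewrite hm0 p00 q0z !scale0r !addr0 ?scaler0.
  by move/hi => [/eqP]; rewrite oner_eq0.
split.
  exists (q1 / D), (- q0 / D); apply/matrixP => i j.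
  move/matrixP: k1 => /(_ i j); rewrite !mxE => k.
  apply: (mulfI Dn); rewrite -k; field; exact: Dn.
exists (- p1 / D), (p0 / D); apply/matrixP => i j.
move/matrixP: k2 => /(_ i j); rewrite !mxE => k.
apply: (mulfI Dn); rewrite -k; field; exact: Dn.
Qed.

Lemma quad (g1 g2 : 'cV[C]_4) : exists s t : C,
  ~ (s = 0 /\ t = 0) /\ dt (s *: g1 + t *: g2) = 0.
Proof.
set D1 := dt g1; set D2 := dt g2.
set E := g1 o0 ord0 * g2 o3 ord0 + g2 o0 ord0 * g1 o3 ord0
       - g1 o1 ord0 * g2 o2 ord0 - g2 o1 ord0 * g1 o2 ord0.
have ex : forall s t, dt (s *: g1 + t *: g2) = s ^+ 2 * D1 + s * t * E + t ^+ 2 * D2.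
  by move=> s t; rewrite /dt /D1 /D2 /E /dt !mxE; ring.
have [D20|D2n] := eqVneq D2 0.
  exists 0, 1; split; first by case=> _ /eqP; rewrite oner_eq0.
  by rewrite ex D20; ring.
set r := sqrtC (E ^+ 2 - 4%:R * D1 * D2).
exists 1, ((- E + r) / (2%:R * D2)); split; first by case => /eqP; rewrite oner_eq0.
rewrite ex.
have h4 : (4%:R * D2 : C) != 0 by rewrite mulf_neq0 // pnatr_eq0.
apply: (mulfI h4); rewrite mulr0.
have -> : 4%:R * D2 * (1 ^+ 2 * D1 + 1 * ((- E + r) / (2%:R * D2)) * E +
    ((- E + r) / (2%:R * D2)) ^+ 2 * D2) = r ^+ 2 - (E ^+ 2 - 4%:R * D1 * D2).
  by field.
by rewrite /r sqrtCK subrr.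
Qed.
End S5.
Section S6.
Variable R : realType.
Local Notation C := (R[i]).
Local Open Scope sesquilinear_scope.
Import Num.Def.

Lemma idE n (i j : 'I_n) : (1%:M : 'M[C]_n) i j = if val i == val j then 1 else 0.
Proof. by rewrite mxE; case: eqP => [->|h]; [rewrite eqxx | case: eqP => // /val_inj]. Qed.

Ltac ent2 := apply/matrixP; let i := fresh "i" in let j := fresh "j" in intros i j;
  rewrite ?idE !mxE ?sum2 ?mxE ?sum2 ?mxE;
  case: (ord2P i) => [|] ->; case: (ord2P j) => [|] -> /=.
Ltac ent4 := apply/matrixP; let i := fresh "i" in let j := fresh "j" in intros i j;
  rewrite ?idE !mxE ?sum4 ?mxE ?sum4 ?mxE;
  case: (ord4P i) => [|[|[|]]] ->; case: (ord4P j) => [|[|[|]]] -> /=.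
Ltac entv := apply/matrixP; let i := fresh "i" in let j := fresh "j" in intros i j;
  rewrite ?mxE ?sum4 ?mxE ?sum4 ?mxE; case: (ord4P i) => [|[|[|]]] ->; rewrite ?(ord1 j) /=.

Definition mkU (a0 a1 : C) : 'M[C]_2 := \matrix_(i, j)
  match val i, val j with 0, 0 => a0 | 1, 0 => a1 | 0, 1 => - a1^* | _, _ => a0^* end.

Definition kvec (a0 a1 b0 b1 : C) : 'cV[C]_4 := \matrix_(i, j)
  match val i with 0 => a0 * b0 | 1 => a0 * b1 | 2 => a1 * b0 | _ => a1 * b1 end.

Lemma mkU_unitary a0 a1 : a0 * a0^* + a1 * a1^* = 1 -> unitary (mkU a0 a1).
Proof.
move=> h; apply: unitary_half. ent2. all: rewrite ?rmorphN /= ?conjCK.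
  all: first [ring | rewrite -h; ring].
Qed.

Lemma col0E a0 a1 b0 b1 : col o0 (kron2 (mkU a0 a1) (mkU b0 b1)) = kvec a0 a1 b0 b1.
Proof. rewrite kron2E; entv; by []. Qed.

Lemma col3E a0 a1 b0 b1 : col o3 (kron2 (mkU a0 a1) (mkU b0 b1)) = - th (kvec a0 a1 b0 b1).
Proof. rewrite kron2E /th; entv; rewrite ?rmorphM ?rmorphN; ring. Qed.

Lemma adj_kron (A B : 'M[C]_2) : (kron2 A B)^t* = kron2 (A^t*) (B^t*).
Proof. rewrite !kron2E; ent4; by rewrite rmorphM. Qed.

Lemma kron_mul (A B A' B' : 'M[C]_2) : kron2 A B *m kron2 A' B' = kron2 (A *m A') (B *m B').
Proof. rewrite !kron2E; ent4; rewrite ?sum2 ?mxE /=; ring. Qed.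

Lemma kron11 : kron2 (1%:M : 'M[C]_2) 1%:M = 1%:M.
Proof. rewrite kron2E; ent4; ring. Qed.

Lemma kron_unitary (A B : 'M[C]_2) : unitary A -> unitary B -> unitary (kron2 A B).
Proof.
move=> /unitaryE [hA _] /unitaryE [hB _]; apply: unitary_half.
by rewrite adj_kron kron_mul hA hB kron11.
Qed.

Lemma unitary_cols_indep (M : 'M[C]_4) : unitary M -> indep (col o0 M) (col o3 M).
Proof.
move=> /unitaryE [_ h2] s t h.
have := congr1 (mulmx (M^t*)) h.
rewrite mulmxDr -!scalemxAr !colE !mulmxA h2 !mul1mx mulmx0 => /matrixP e.
have := e o0 ord0; have := e o3 ord0; rewrite !mxE /=.
by move=> ht hs; split; [move: hs | move: ht]; rewrite ?mulr0 ?mulr1 ?addr0 ?add0r.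
Qed.
End S6.
Section S7.
Variable R : realType.
Local Notation C := (R[i]).
Local Open Scope sesquilinear_scope.
Import Num.Def.

Ltac entv := apply/matrixP; let i := fresh "i" in let j := fresh "j" in intros i j;
  rewrite ?mxE ?sum4 ?mxE ?sum4 ?mxE; case: (ord4P i) => [|[|[|]]] ->; rewrite ?(ord1 j) /=.

Lemma nz2 (a0 a1 : C) : (a0 != 0) || (a1 != 0) -> a0 * a0^* + a1 * a1^* != 0.
Proof. by rewrite paddr_eq0 ?mul_conjC_ge0 // !mul_conjC_eq0 negb_and. Qed.

Lemma factor (x : 'cV[C]_4) : x != 0 -> dt x = 0 -> exists a0 a1 b0 b1 : C,
  [/\ a0 * a0^* + a1 * a1^* != 0, b0 * b0^* + b1 * b1^* != 0 & x = kvec a0 a1 b0 b1].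
Proof.
move=> xn; rewrite /dt => hd.
have [h0|h0] := eqVneq (x o0 ord0) 0.
  have [h1|h1] := eqVneq (x o1 ord0) 0.
    exists 0, 1, (x o2 ord0), (x o3 ord0); split.
    - by rewrite nz2 // oner_eq0 orbT.
    - apply: nz2; have [h2|h2] := eqVneq (x o2 ord0) 0; last by apply/orP; left.
      have [h3|h3] := eqVneq (x o3 ord0) 0; last by apply/orP; right.
      by move: xn; rewrite (vec0 h0 h1 h2 h3) eqxx.
    - by entv; rewrite ?h0 ?h1; ring.
  have h2 : x o2 ord0 = 0.
    by move/eqP: hd; rewrite h0 mul0r sub0r oppr_eq0 mulf_eq0 (negPf h1) => /eqP.
  exists (x o1 ord0), (x o3 ord0), 0, 1; split.
  - by rewrite nz2 // h1.
  - by rewrite nz2 // oner_eq0 orbT.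
  - by entv; rewrite ?h0 ?h2; ring.
exists (x o0 ord0), (x o2 ord0), 1, (x o1 ord0 / x o0 ord0); split.
- by rewrite nz2 // h0.
- by rewrite nz2 // oner_eq0.
- entv; try ring; first field; first exact: h0.
  move/eqP: hd; rewrite subr_eq0 => /eqP hd.
  apply: (mulfI h0); rewrite hd; field; exact: h0.
Qed.

Lemma normz (a0 a1 : C) : a0 * a0^* + a1 * a1^* != 0 -> exists nu : C,
  nu != 0 /\ (a0 / nu) * (a0 / nu)^* + (a1 / nu) * (a1 / nu)^* = 1.
Proof.
move=> hn; set n := a0 * a0^* + a1 * a1^* in hn *.
have n0 : 0 <= n by rewrite addr_ge0 // mul_conjC_ge0.
set nu := sqrtC n.
have nu0 : 0 <= nu by rewrite sqrtC_ge0.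
have nuc : nu^* = nu by apply: conj_Creal; apply: ger0_real.
have nu2 : nu ^+ 2 = n by rewrite sqrtCK.
have nun : nu != 0 by apply: contra hn => /eqP h; rewrite -nu2 h expr0n.
exists nu; split => //.
rewrite !rmorphM !fmorphV /= nuc.
have -> : a0 / nu * (a0^* / nu) + a1 / nu * (a1^* / nu) = n / nu ^+ 2.
  by rewrite /n; field; exact: nun.
by rewrite nu2 divff.
Qed.

Lemma prod (g1 g2 : 'cV[C]_4) (c1 c2 : C) : indep g1 g2 -> th g1 = c1 *: g1 ->
  th g2 = c2 *: g2 -> exists A B : 'M[C]_2,
  [/\ unitary A, unitary B, inspan (col o0 (kron2 A B)) g1 g2,
      inspan (col o3 (kron2 A B)) g1 g2 &
      inspan g1 (col o0 (kron2 A B)) (col o3 (kron2 A B)) /\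
      inspan g2 (col o0 (kron2 A B)) (col o3 (kron2 A B))].
Proof.
move=> hi t1 t2.
have [s [t [nst hd]]] := quad g1 g2.
move: hd; set x := s *: g1 + t *: g2 => hd.
have xn : x != 0 by apply/negP => /eqP /hi.
have [a0 [a1 [b0 [b1 [na nb hx]]]]] := factor xn hd.
have [nu [nun hu]] := normz na; have [mu [mun hm]] := normz nb.
exists (mkU (a0 / nu) (a1 / nu)), (mkU (b0 / mu) (b1 / mu)).
have Mu := kron_unitary (mkU_unitary hu) (mkU_unitary hm).
set k := (nu * mu)^-1.
have kv : kvec (a0 / nu) (a1 / nu) (b0 / mu) (b1 / mu) = k *: x.
  rewrite hx /k; entv; field; by rewrite nun mun.
have c0 : col o0 (kron2 (mkU (a0 / nu) (a1 / nu)) (mkU (b0 / mu) (b1 / mu)))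
   = (k * s) *: g1 + (k * t) *: g2.
  by rewrite col0E kv /x scalerDr !scalerA.
have c3 : col o3 (kron2 (mkU (a0 / nu) (a1 / nu)) (mkU (b0 / mu) (b1 / mu)))
   = (- (k^* * s^* * c1)) *: g1 + (- (k^* * t^* * c2)) *: g2.
  rewrite col3E kv thZ /x thD !thZ t1 t2.
  by apply/matrixP => i j; rewrite !mxE; ring.
have [] := span_swap c0 c3 (unitary_cols_indep Mu) => sp1 sp2.
split => //; [exact: mkU_unitary | exact: mkU_unitary | by rewrite c0; do 2 eexists | by rewrite c3; do 2 eexists].
Qed.
End S7.
Section S8.
Variable R : realType.
Local Notation C := (R[i]).
Local Open Scope sesquilinear_scope.
Import Num.Def.

Ltac ent2 := apply/matrixP; let i := fresh "i" in let j := fresh "j" in intros i j;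
  rewrite ?idE !mxE ?sum2 ?mxE ?sum2 ?mxE;
  case: (ord2P i) => [|] ->; case: (ord2P j) => [|] -> /=.
Ltac ent4 := apply/matrixP; let i := fresh "i" in let j := fresh "j" in intros i j;
  rewrite ?idE !mxE ?sum4 ?mxE ?sum4 ?mxE ?sum4 ?mxE;
  case: (ord4P i) => [|[|[|]]] ->; case: (ord4P j) => [|[|[|]]] -> /=.

Definition Mc (U3 : 'M[C]_2) : 'M[C]_4 := \matrix_(i, j)
  match val i, val j with 0, 0 => 1 | 1, 1 => 1 | 2, 2 => U3 p0 p0 | 2, 3 => U3 p0 p1
  | 3, 2 => U3 p1 p0 | 3, 3 => U3 p1 p1 | _, _ => 0 end.

Lemma ctrlUE (U3 : 'M[C]_2) : ctrlU U3 = Mc U3.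
Proof.
apply/esym; rewrite -[Mc U3 : 'M_(2 + 2)](@submxK _ 2 2 2 2) /ctrlU.
have e1 : ulsubmx (Mc U3 : 'M_(2 + 2)) = 1%:M by ent2.
have e2 : ursubmx (Mc U3 : 'M_(2 + 2)) = 0 by ent2.
have e3 : dlsubmx (Mc U3 : 'M_(2 + 2)) = 0 by ent2.
have e4 : drsubmx (Mc U3 : 'M_(2 + 2)) = U3 by ent2.
by rewrite e1 e2 e3 e4.
Qed.
End S8.
Section S9.
Variable R : realType.
Local Notation C := (R[i]).
Local Open Scope sesquilinear_scope.
Import Num.Def.

Ltac ent2 := apply/matrixP; let i := fresh "i" in let j := fresh "j" in intros i j;
  rewrite ?idE !mxE ?sum2 ?mxE ?sum2 ?mxE;
  case: (ord2P i) => [|] ->; case: (ord2P j) => [|] -> /=.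
Ltac ent4 := apply/matrixP; let i := fresh "i" in let j := fresh "j" in intros i j;
  rewrite ?idE !mxE ?sum4 ?mxE ?idE ?sum4 ?mxE ?idE ?sum4 ?mxE ?idE;
  case: (ord4P i) => [|[|[|]]] ->; case: (ord4P j) => [|[|[|]]] -> /=.

Lemma entry m n (A B : 'M[C]_(m, n)) i j : A = B -> A i j = B i j.
Proof. by move->. Qed.

Lemma lc1 (a b c : C) : a = 1 -> b = 1 -> a = b + c -> c = 0.
Proof. by move=> -> -> /eqP; rewrite addrC -subr_eq subrr eq_sym => /eqP. Qed.

Lemma sq0 (a b : C) : a * a^* + b * b^* = 0 -> a = 0 /\ b = 0.
Proof.
move/eqP; rewrite paddr_eq0 ?mul_conjC_ge0 // !mul_conjC_eq0 => /andP [/eqP -> /eqP ->].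
by [].
Qed.

Lemma blockV (V : 'M[C]_4) : unitary V -> V o1 o0 = 0 -> V o2 o0 = 0 ->
  V o1 o3 = 0 -> V o2 o3 = 0 ->
  exists U3 U4 : 'M[C]_2,
    [/\ unitary U3, unitary U4 & V = Cn R *m ctrlU U3 *m kron2 1%:M U4 *m Cn R].
Proof.
move=> /unitaryE [h1 h2] z10 z20 z13 z23.
pose U4 : 'M[C]_2 := \matrix_(i, j) match val i, val j with
  0, 0 => V o0 o0 | 0, 1 => V o0 o3 | 1, 0 => V o3 o0 | _, _ => V o3 o3 end.
have U4u : U4^t* *m U4 = 1%:M.
  ent2; [move: (entry o0 o0 h2) | move: (entry o0 o3 h2) |
         move: (entry o3 o0 h2) | move: (entry o3 o3 h2)];
  rewrite ?idE !mxE sum4 !mxE /= ?z10 ?z20 ?z13 ?z23 => e; apply: (etrans _ e); ring.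
have U4u' := mulmx1C U4u.
have [z01 z02] : V o0 o1 = 0 /\ V o0 o2 = 0.
  apply: sq0; apply: lc1.
  - by move: (entry o0 o0 h1); rewrite ?idE !mxE sum4 !mxE /=; apply.
  - by move: (entry p0 p0 U4u'); rewrite ?idE !mxE sum2 !mxE /=; apply.
  - ring.
have [z31 z32] : V o3 o1 = 0 /\ V o3 o2 = 0.
  apply: sq0; apply: lc1.
  - by move: (entry o3 o3 h1); rewrite ?idE !mxE sum4 !mxE /=; apply.
  - by move: (entry p1 p1 U4u'); rewrite ?idE !mxE sum2 !mxE /=; apply.
  - ring.
pose N : 'M[C]_2 := \matrix_(i, j) match val i, val j with
  0, 0 => V o2 o2 | 0, 1 => V o2 o1 | 1, 0 => V o1 o2 | _, _ => V o1 o1 end.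
have Nu : N^t* *m N = 1%:M.
  ent2; [move: (entry o2 o2 h2) | move: (entry o2 o1 h2) |
         move: (entry o1 o2 h2) | move: (entry o1 o1 h2)];
  rewrite ?idE !mxE sum4 !mxE /= ?z01 ?z02 ?z31 ?z32 => e; apply: (etrans _ e); ring.
have NU : unitary N by apply/unitaryE; split => //; apply: mulmx1C.
have U4U : unitary U4 by apply/unitaryE.
exists (N *m U4^t*), U4; split => //.
  by apply: unitary_mul => //; apply: unitary_adj.
have hU3 : N *m U4^t* *m U4 = N by rewrite -mulmxA U4u mulmx1.
move: hU3; move: (N *m U4^t*) => U3 hU3.
have f00 := entry p0 p0 hU3; have f01 := entry p0 p1 hU3.
have f10 := entry p1 p0 hU3; have f11 := entry p1 p1 hU3.
move: f00 f01 f10 f11; rewrite !mxE !sum2 !mxE /= => f00 f01 f10 f11.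
have hW : ctrlU U3 *m kron2 1%:M U4 = \matrix_(i, j) match val i, val j with
  | 0, 0 => V o0 o0 | 0, 1 => V o0 o3 | 1, 0 => V o3 o0 | 1, 1 => V o3 o3
  | 2, 2 => V o2 o2 | 2, 3 => V o2 o1 | 3, 2 => V o1 o2 | 3, 3 => V o1 o1
  | _, _ => 0 end.
  rewrite ctrlUE kron2E; ent4;
  first [ring | apply: (etrans _ f00); ring | apply: (etrans _ f01); ring
        | apply: (etrans _ f10); ring | apply: (etrans _ f11); ring].
rewrite -(mulmxA (Cn R)) hW.
ent4; rewrite ?z10 ?z20 ?z13 ?z23 ?z01 ?z02 ?z31 ?z32; ring.
Qed.
End S9.
Section S10.
Variable R : realType.
Local Notation C := (R[i]).
Local Open Scope sesquilinear_scope.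
Import Num.Def.

Lemma inspan_mul (U : 'M[C]_4) v g1 g2 : inspan v g1 g2 -> inspan (U *m v) (U *m g1) (U *m g2).
Proof. by move=> [s [t ->]]; exists s, t; rewrite mulmxDr -!scalemxAr. Qed.

Lemma inspan_trans (v u1 u2 h1 h2 : 'cV[C]_4) :
  inspan v u1 u2 -> inspan u1 h1 h2 -> inspan u2 h1 h2 -> inspan v h1 h2.
Proof.
move=> [s [t ->]] [a [b ->]] [c [d ->]].
exists (s * a + t * c), (s * b + t * d).
by apply/matrixP => i j; rewrite !mxE; ring.
Qed.

Lemma zero_span (L : 'M[C]_4) v : unitary L -> inspan v (col o0 L) (col o3 L) ->
  (L^t* *m v) o1 ord0 = 0 /\ (L^t* *m v) o2 ord0 = 0.
Proof.
move=> /unitaryE [_ h2] [s [t ->]].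
rewrite mulmxDr -!scalemxAr !colE !mulmxA h2 !mul1mx !mxE /=.
by split; ring.
Qed.
End S10.

Section Main.
Local Open Scope sesquilinear_scope.
Lemma main_thm (R : realType) (U : 'M[R[i]]_4) :
  unitary U ->
  exists U1 U2 U3 U4 U5 U6 : 'M[R[i]]_2,
    (unitary U1 /\ unitary U2 /\ unitary U3 /\ unitary U4 /\ unitary U5 /\ unitary U6) /\
    U = kron2 U1 U2 *m botCNOT R *m ctrlU U3 *m kron2 1%:M U4 *m botCNOT R
          *m kron2 U5 U6.
Proof.
move=> hU; have [h1 h2] := (unitaryE U).1 hU.
have [w1 [w2 [l1 [l2 [[hi th1 th2 k1 k2] [n1 n2]]]]]] := exists_w (Kunit h1 h2) (KYK h1 h2).
have th1' : th w1 = 1 *: w1 by rewrite scale1r.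
have th2' : th w2 = 1 *: w2 by rewrite scale1r.
have [A [B [uA uB s0 s3 _]]] := prod hi th1' th2'.
have lnz : forall l : R[i], l * Num.conj l = 1 -> l != 0.
  by move=> l hl; apply/negP => /eqP l0; move: hl; rewrite l0 mul0r => /eqP; rewrite eq_sym oner_eq0.
have tu : forall w l, th w = w -> Km U *m w = l *: w -> l * Num.conj l = 1 ->
    th (U *m w) = l^-1 *: (U *m w).
  move=> w l hw hk hl; have e := thU h1 hw hk.
  by rewrite -[in RHS]e scalerA mulVf ?scale1r // (lnz _ hl).
have hiu : indep (U *m w1) (U *m w2).
  move=> s t h; apply: hi; have := congr1 (mulmx (U^t*)) h.
  by rewrite mulmx0 mulmxDr -!scalemxAr !mulmxA h2 !mul1mx.
have [A' [B' [uA' uB' _ _ [g1s g2s]]]] := prod hiu (tu _ _ th1 k1 n1) (tu _ _ th2 k2 n2).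
have uRs := kron_unitary uA uB; have uL := kron_unitary uA' uB'.
move: s0 s3 g1s g2s uRs uL.
set Rs := kron2 A B; set L := kron2 A' B' => s0 s3 g1s g2s uRs uL.
have cV : forall j, col j (L^t* *m U *m Rs) = L^t* *m (U *m col j Rs).
  by move=> j; rewrite !colE !mulmxA.
have [z10 z20] := zero_span uL (inspan_trans (inspan_mul U s0) g1s g2s).
have [z13 z23] := zero_span uL (inspan_trans (inspan_mul U s3) g1s g2s).
move: z10 z20 z13 z23; rewrite -!cV ![(col _ _) _ _]mxE => z10 z20 z13 z23.
have uV : unitary (L^t* *m U *m Rs).
  exact: (unitary_mul (unitary_mul (unitary_adj uL) hU) uRs).
have [U3 [U4 [uU3 uU4 hV]]] := blockV uV z10 z20 z13 z23.
exists A', B', U3, U4, (A^t*), (B^t*).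
split; first exact: (conj uA' (conj uB' (conj uU3 (conj uU4 (conj (unitary_adj uA) (unitary_adj uB)))))).
have hLL : L *m L^t* = 1%:M by case: ((unitaryE L).1 uL).
have hRR : Rs *m Rs^t* = 1%:M by case: ((unitaryE Rs).1 uRs).
have e : L *m (L^t* *m U *m Rs) *m Rs^t* = U.
  by rewrite !mulmxA hLL mul1mx (cancel1 _ hRR).
rewrite -{1}e hV botCNOTE -adj_kron -/Rs !mulmxA.
by [].
Qed.
End Main.

Unset Implicit Arguments.

Theorem proposition3 (R : realType) (U : 'M[R[i]]_4) :
  unitary U ->
  exists U1 U2 U3 U4 U5 U6 : 'M[R[i]]_2,
    (unitary U1 /\ unitary U2 /\ unitary U3 /\ unitary U4 /\ unitary U5 /\ unitary U6) /\
    U = kron2 U1 U2 *m botCNOT R *m ctrlU U3 *m kron2 1%:M U4 *m botCNOT R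
          *m kron2 U5 U6.
Proof. exact: main_thm. Qed.
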